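(* For every $\ell\in\mathbb{N}_+$, every $m\in\mathbb{N}$ and every canonical theory $T$ over a finite relational language $\mathcal{L}$, there exists $n\in\mathbb{N}$ such that for every (finite) model $M$ of $T$ and every $\ell$-split order $(f,\preceq)\in\mathcal{S}_{\ell,V(M)}$ with $\mathrm{thk}(f)\ge n$, there exist an $\ell$-Ramsey pattern $Q\in\mathcal{P}_{\ell,\mathcal{L}}$ and a set $W\subseteq V(M)$ such that $\mathrm{thk}(f|_W)\ge m$ and $M|_W$ is $Q$-uniform with respect to $(f|_W,\preceq_W)$. (That is, the $(\ell,T,m)$-Ramsey number $R_{\ell,T}(m)$, the least such $n$, is finite.)
   Context: A finite relational language $\mathcal{L}$ is a finite set of predicate symbols $P$ with arities $k(P)\in\mathbb{N}_+$. Structures are finite and canonical: no predicate holds on a tuple with a repeated entry. For a structure $M$, $V(M)$ is its vertex set, $(V)_k$ is the set of injective maps $[k]\to V$, $R_P(M)\subseteq(V(M))_{k(P)}$ is the set of tuples satisfying $P$, and $M|_W$ is the induced substructure on $W\subseteq V(M)$. A canonical theory is a universal theory entailing that each $P$ fails on tuples with repeated entries. For $\ell\in\mathbb{N}_+$ and a set $V$, an $\ell$-split order over $V$ is a pair $(f,\preceq)$ with $f\colon V\to[\ell]$ and $\preceq$ a (reflexive) partial order on $V$ such that two elements $v,w$ are $\preceq$-comparable iff $f(v)=f(w)$. $\mathcal{S}_{\ell,V}$ is the set of these and $\mathcal{S}_{\ell,k}=\mathcal{S}_{\ell,[k]}$. For a partial order $\preceq$ on $V$ and an injection $g\colon W\to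 V$, $\preceq_g$ is the partial order on $W$ with $w_1\preceq_g w_2\iff g(w_1)\preceq g(w_2)$; for $W\subseteq V$, $\preceq_W$ is the restriction of $\preceq$ to $W$. An $\ell$-Ramsey pattern on $\mathcal L$ is a map $Q$ assigning to each $P\in\mathcal{L}$ a set $Q_P\subseteq\mathcal{S}_{\ell,k(P)}$; $\mathcal{P}_{\ell,\mathcal L}$ is the set of these. A structure $M$ is $Q$-uniform with respect to $(f,\preceq)\in\mathcal{S}_{\ell,V(M)}$ if for every $P\in\mathcal L$, $R_P(M)=\{\alpha\in(V(M))_{k(P)}:(f\circ\alpha,\preceq_\alpha)\in Q_P\}$. The thickness of $f\colon V\to[\ell]$ is $\mathrm{thk}(f)=\min_{i\in[\ell]}|f^{-1}(i)|$. *)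

(* Defs.v *)
From mathcomp Require Import all_boot.
Set Implicit Arguments.
Unset Strict Implicit.
Unset Printing Implicit Defensive.

(* A finite relational language: a finType L of predicate symbols with
   arities k : L -> nat (positivity of arities is a hypothesis of the theorem).
   [k] is represented by 'I_k and [l] by 'I_l. *)

Record structure (L : finType) (k : L -> nat) := Structure {
  vert : finType;
  rel_of : forall P : L, pred {ffun 'I_(k P) -> vert}
}.
Arguments rel_of {L k} s P _.

Definition canonical_structure (L : finType) (k : L -> nat) (M : structure k) :=
  forall (P : L) (a : {ffun 'I_(k P) -> vert M}), rel_of M P a -> injective a.

Inductive qf (L : finType) (k : L -> nat) : Type :=
  | QEq : nat -> nat -> qf k
  | QRel : forall P : L, ('I_(k P) -> nat) -> qf k
  | QNot : qf k -> qf k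
  | QAnd : qf k -> qf k -> qf k.
Arguments QEq {L k} _ _.
Arguments QRel {L k} P _.
Arguments QNot {L k} _.
Arguments QAnd {L k} _ _.

Fixpoint qf_holds (L : finType) (k : L -> nat) (M : structure k)
    (e : nat -> vert M) (phi : qf k) : bool :=
  match phi with
  | QEq x y => e x == e y
  | QRel P a => rel_of M P [ffun i => e (a i)]
  | QNot psi => ~~ qf_holds e psi
  | QAnd psi chi => qf_holds e psi && qf_holds e chi
  end.

(* A universal sentence is the universal closure of a quantifier-free formula;
   M satisfies it iff the formula holds under every assignment. *)
Definition sat_univ (L : finType) (k : L -> nat) (M : structure k) (phi : qf k) :=
  forall e : nat -> vert M, qf_holds e phi.

Definition utheory (L : finType) (k : L -> nat) := qf k -> Prop.

Definition models (L : finType) (k : L -> nat) (M : structure k) (T : utheory k) :=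
  forall phi, T phi -> sat_univ M phi.

(* Semantic entailment (over finite structures; for universal sentences over a
   universal theory this coincides with entailment over all structures). *)
Definition entails (L : finType) (k : L -> nat) (T : utheory k) (phi : qf k) :=
  forall M : structure k, models M T -> sat_univ M phi.

Definition canon_axiom (L : finType) (k : L -> nat) (P : L) (i j : 'I_(k P)) : qf k :=
  QNot (QAnd (QRel P (fun t : 'I_(k P) => nat_of_ord t)) (QEq (nat_of_ord i) (nat_of_ord j))).

Definition canonical_theory (L : finType) (k : L -> nat) (T : utheory k) :=
  forall (P : L) (i j : 'I_(k P)), i != j -> entails T (canon_axiom i j).

Definition split_order (V : finType) (l : nat) (f : V -> 'I_l) (le : rel V) :=
  [/\ reflexive le, antisymmetric le, transitive le &
      forall v w, (le v w || le w v) = (f v == f w)].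

Definition thk_on (V : finType) (l : nat) (f : V -> 'I_l) (W : {set V}) : nat :=
  \big[minn/#|W|]_(i < l) #|[set v in W | f v == i]|.

Definition thk (V : finType) (l : nat) (f : V -> 'I_l) : nat := thk_on f setT.

(* An l-Ramsey pattern: for each P a set of l-split orders over [k(P)],
   the partial order being given by its graph as a set of pairs. *)
Definition pattern (L : finType) (k : L -> nat) (l : nat) :=
  forall P : L, {set {ffun 'I_(k P) -> 'I_l} * {set 'I_(k P) * 'I_(k P)}}.

Definition valid_pattern (L : finType) (k : L -> nat) (l : nat) (Q : pattern k l) :=
  forall (P : L) g r, (g, r) \in Q P ->
    split_order (fun i : 'I_(k P) => g i) (fun i j => (i, j) \in r).

Definition uniform_on (L : finType) (k : L -> nat) (l : nat) (M : structure k)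
    (Q : pattern k l) (f : vert M -> 'I_l) (le : rel (vert M)) (W : {set vert M}) :=
  forall (P : L) (a : {ffun 'I_(k P) -> vert M}),
    injective a -> (forall i, a i \in W) ->
    rel_of M P a =
      (([ffun i => f (a i)], [set ij | le (a ij.1) (a ij.2)]) \in Q P).
Arguments uniform_on {L k l} M Q f le W.

(* Main.v *)
Require Import Defs.
From mathcomp Require Import all_boot.
From mathcomp Require Import zify.
Set Implicit Arguments.
Unset Strict Implicit.
Unset Printing Implicit Defensive.

Section Ram.
Variables (l : nat) (C : finType).

Definition cl (V : finType) (f : V -> 'I_l) (S : {set V}) (i : 'I_l) :=
  [set v in S | f v == i].

Definition distn (V : finType) (f : V -> 'I_l) (n : nat) (B : {set V}) :
  {ffun 'I_l -> 'I_n.+1} := [ffun i => inord #|cl f B i|].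

Definition ramsey_stmt (K : nat) := forall m, exists N,
  forall (V : finType) (f : V -> 'I_l) (S : {set V}) (c : {set V} -> C),
  (forall i, N <= #|cl f S i|) ->
  exists H : {set V}, H \subset S /\ (forall i, m <= #|cl f H i|) /\
    exists col : {ffun 'I_l -> 'I_K.+1} -> C,
      forall B : {set V}, B \subset H -> #|B| = K -> c B = col (distn f K B).

Lemma cl_sub V f (A B : {set V}) i : A \subset B -> cl f A i \subset cl f B i.
Proof.
move=> /subsetP AB; apply/subsetP => v; rewrite !inE => /andP[/AB -> ->]. by [].
Qed.

Lemma cl_card_sub V f (A B : {set V}) i : A \subset B -> #|cl f A i| <= #|cl f B i|.
Proof. by move=> AB; apply: subset_leq_card; apply: cl_sub. Qed.

Lemma cl_le V f (B : {set V}) i : #|cl f B i| <= #|B|.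
Proof. apply: subset_leq_card; apply/subsetP => v; rewrite inE => /andP[]. by []. Qed.

Lemma ramsey0 : ramsey_stmt 0.
Proof.
move=> m; exists m => V f S c HS; exists S; split => //; split => //.
exists (fun _ => c set0) => B _ /eqP; rewrite cards_eq0 => /eqP ->. by [].
Qed.

Lemma cl_D1 V f (B : {set V}) x i : x \in B ->
  #|cl f (B :\ x) i| = if f x == i then #|cl f B i| - 1 else #|cl f B i|.
Proof.
move=> xB.
have -> : cl f (B :\ x) i = cl f B i :\ x.
  by apply/setP => v; rewrite !inE; case: (v == x); rewrite ?andbF.
rewrite [in RHS](cardsD1 x (cl f B i)) !inE xB /=.
by case: (f x == i) => /=; lia.
Qed.

Lemma pigeon (V G : finType) (Y : {set V}) (h : V -> G) m :
  m * #|G| + 1 <= #|Y| -> exists g, m <= #|[set y in Y | h y == g]|.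
Proof.
move=> HY; case: (pickP (fun g => m <= #|[set y in Y | h y == g]|)) => [g Hg|Hn].
  by exists g.
exfalso.
have E : #|Y| = \sum_(g : G) #|[set y in Y | h y == g]|.
  rewrite -sum1_card (partition_big h xpredT) //=.
  by apply: eq_bigr => g _; rewrite -sum1_card; apply: eq_bigl => y; rewrite inE.
have : #|Y| <= \sum_(g : G) m.-1.
  rewrite E; apply: leq_sum => g _; move: (Hn g) => /= /negbT; rewrite -ltnNge.
  by case: m {HY Hn E} => //.
rewrite sum_nat_const.
have -> : #|(fun _ : G => true)| = #|G| by apply: eq_card.
case: m HY {Hn E} => [|m] /=; rewrite ?mul0n ?muln0 => HY H2; nia.
Qed.


Definition PH (V : finType) (f : V -> 'I_l) (c : {set V} -> C) K (X : {set V})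
  (colx : V -> {ffun {ffun 'I_l -> 'I_K.+1} -> C}) :=
  forall B : {set V}, B \subset X -> #|B| = K.+1 ->
    exists2 x, x \in B & ((forall y, y \in B -> f x <= f y) /\
                          c B = colx x (distn f K (B :\ x))).

Definition leI := fun i j : 'I_l => i <= j.

Lemma cl_U1 V f (X : {set V}) x j : x \notin X ->
  #|cl f (x |: X) j| = (f x == j) + #|cl f X j|.
Proof.
move=> xX.
have -> : cl f (x |: X) j = if f x == j then x |: cl f X j else cl f X j.
  apply/setP => v; case: ifP => E; rewrite !inE; case: (eqVneq v x) => [->|] //=.
  by rewrite E andbF.
case: ifP => _; last by [].
by rewrite cardsU1 !inE (negbTE xX).
Qed.

Lemma inner K : ramsey_stmt K -> forall s : seq 'I_l, sorted leI s ->
  exists N, forall (V : finType) (f : V -> 'I_l) (S : {set V}) (c : {set V} -> C),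
  (forall i, N <= #|cl f S i|) ->
  exists (X : {set V}) (colx : V -> {ffun {ffun 'I_l -> 'I_K.+1} -> C}), [/\ X \subset S, (forall i, count_mem i s <= #|cl f X i|),
                    (forall x, x \in X -> f x \in s) & PH f c X colx].
Proof.
move=> RK; elim=> [|i s IH] Hs.
  exists 0 => V f S c _; exists set0, (fun _ => [ffun _ => c set0]); split => //.
  - exact: sub0set.
  - by move=> x; rewrite inE.
  - move=> B /subset_leqif_cards [] Hle _ HB; move: Hle; rewrite cards0 HB. by [].
have Hs' : sorted leI s by move: Hs => /= /path_sorted.
have Hmin : all (leI i) s.
  by apply: order_path_min Hs => a b d; rewrite /leI; apply: leq_trans.
case: (IH Hs') => N' HN'.
case: (RK N') => N1 HN1.
exists N1.+1 => V f S c HS.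
have : cl f S i != set0 by rewrite -card_gt0; apply: leq_trans (HS i).
case/set0Pn => x; rewrite inE => /andP[xS /eqP fx].
have HS1 : forall j, N1 <= #|cl f (S :\ x) j|.
  move=> j; rewrite cl_D1 //; move: (HS j); case: ifP => _; lia.
case: (HN1 V f (S :\ x) (fun B => c (x |: B)) HS1) => H [HsubH [HthH [col0 Hcol0]]].
case: (HN' V f H c HthH) => X [colx [XH Xcnt Xin XPH]].
have xX : x \notin X.
  apply/negP => /(subsetP XH) /(subsetP HsubH); rewrite !inE eqxx. by [].
exists (x |: X), (fun y => if y == x then [ffun d => col0 d] else colx y); split.
- apply/subsetP => y; rewrite !inE; case/orP => [/eqP -> //|/(subsetP XH)/(subsetP HsubH)].
  by rewrite inE => /andP[].
- move=> j; rewrite cl_U1 // /= fx; move: (Xcnt j); rewrite eq_sym; case: (i == j) => /=; lia.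
- move=> y; rewrite !inE; case/orP => [/eqP ->|/Xin ->]; last by rewrite orbT.
  by rewrite fx eqxx.
- move=> B BX HB.
  case: (boolP (x \in B)) => xB.
    exists x => //; split.
      move=> y yB; have : y \in x |: X by apply: (subsetP BX).
      rewrite !inE; case/orP => [/eqP -> //|/Xin fy].
      by rewrite fx; move/allP: Hmin => /(_ _ fy).
    rewrite eqxx ffunE -Hcol0.
    + by rewrite setD1K.
    + apply/subsetP => y; rewrite !inE => /andP[yx yB].
      have : y \in x |: X by apply: (subsetP BX).
      rewrite !inE (negbTE yx) /= => yX; exact: (subsetP XH).
    + by move: HB; rewrite (cardsD1 x B) xB; lia.
  have BX' : B \subset X.
    apply/subsetP => y yB; have : y \in x |: X by apply: (subsetP BX).
    rewrite !inE; case/orP => [/eqP Hy|//]; by move: xB; rewrite -Hy yB.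
  case: (XPH B BX' HB) => y yB [Hm Hc]; exists y => //; split => //.
  have -> : (y == x) = false by apply/negP => /eqP Hy; move: xB; rewrite -Hy yB.
  by [].
Qed.


Lemma count_flat t (i : 'I_l) : count_mem i (flatten (nseq t (enum 'I_l))) = t.
Proof.
elim: t => [|t IH] //=; rewrite count_cat IH.
by rewrite count_uniq_mem ?enum_uniq ?mem_enum.
Qed.

Lemma distn_val V f n (B : {set V}) i : #|B| <= n -> (distn f n B i : nat) = #|cl f B i|.
Proof. move=> HB; rewrite ffunE inordK // ltnS; apply: leq_trans HB; exact: cl_le. Qed.

Lemma ramsey_step K : ramsey_stmt K -> ramsey_stmt K.+1.
Proof.
move=> RK m.
pose G := {ffun {ffun 'I_l -> 'I_K.+1} -> C}.
pose t := m * #|G| + 1.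
pose s := sort leI (flatten (nseq t (enum 'I_l))).
have Hs : sorted leI s by apply: sort_sorted => a b; apply: leq_total.
have Hcnt : forall i, count_mem i s = t.
  by move=> i; rewrite /s (permP (permEl (perm_sort _ _))) count_flat.
case: (inner RK Hs) => N HN; exists N => V f S c HS.
case: (HN V f S c HS) => X [colx [XS Xcnt Xin XPH]].
have : forall i : 'I_l, exists g : G, m <= #|[set y in cl f X i | colx y == g]|.
  by move=> i; apply: pigeon; rewrite -/t -(Hcnt i).
case/fin_all_exists => gam Hgam.
pose H := [set x in X | colx x == gam (f x)].
have clH : forall i, cl f H i = [set y in cl f X i | colx y == gam i].
  move=> i; apply/setP => y; rewrite /cl !inE; case: (eqVneq (f y) i) => [<-|_]; last by rewrite !andbF.
  by rewrite !andbT.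
exists H; split.
  apply: subset_trans XS; apply/subsetP => y; rewrite inE => /andP[]. by [].
split; first by move=> i; rewrite clH.
pose dec (d : {ffun 'I_l -> 'I_K.+2}) (i0 : 'I_l) : {ffun 'I_l -> 'I_K.+1} :=
  [ffun j => inord (if j == i0 then (d j).-1 else d j)].
exists (fun d : {ffun 'I_l -> 'I_K.+2} => match [pick i : 'I_l | (0 < d i) && [forall j : 'I_l, (0 < d j) ==> (i <= j)]] with
                 | Some i0 => gam i0 (dec d i0) | None => c set0 end).
move=> B BH HB.
have BX : B \subset X by apply: subset_trans BH _; apply/subsetP => y; rewrite inE => /andP[].
case: (XPH B BX HB) => x xB [Hmin Hc].
have dv : forall j, (distn f K.+1 B j : nat) = #|cl f B j| by move=> j; rewrite distn_val ?HB.
have Hpos : forall j, 0 < #|cl f B j| -> f x <= j.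
  move=> j; rewrite card_gt0 => /set0Pn [y]; rewrite inE => /andP[yB /eqP <-]; exact: Hmin.
have xH : colx x = gam (f x) by move: (subsetP BH x xB); rewrite inE => /andP[_ /eqP].
case: pickP => [i0 /andP[Hi0 /forallP Hall]|Hn].
  have Ei : i0 = f x.
    apply: val_inj; apply/eqP; rewrite eqn_leq; apply/andP; split.
      apply: (implyP (Hall (f x))); rewrite dv card_gt0; apply/set0Pn; exists x.
      by rewrite inE xB eqxx.
    by apply: Hpos; rewrite -dv.
  rewrite Ei Hc xH; congr (gam (f x) _); apply/ffunP => j; rewrite !ffunE.
  rewrite cl_D1 // inordK; last by rewrite ltnS; apply: leq_trans (cl_le _ _ _) _; rewrite HB.
  by rewrite eq_sym subn1; case: (f x == j).
exfalso; move: (Hn (f x)); rewrite /= dv card_gt0.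
have -> : cl f B (f x) != set0 by apply/set0Pn; exists x; rewrite inE xB eqxx.
rewrite /=; move/negbT/forallPn => [j]; rewrite negb_imply => /andP[].
by rewrite dv => /Hpos ->.
Qed.

Lemma ramsey_all K : ramsey_stmt K.
Proof. elim: K => [|K IH]; [exact: ramsey0 | exact: ramsey_step]. Qed.


Lemma ramsey_upto Kmax : forall m, exists N,
  forall (V : finType) (f : V -> 'I_l) (S : {set V}) (c : {set V} -> C),
  (forall i, N <= #|cl f S i|) ->
  exists H : {set V}, H \subset S /\ (forall i, m <= #|cl f H i|) /\
    forall B B' : {set V}, B \subset H -> B' \subset H -> #|B| <= Kmax ->
      #|B| = #|B'| -> (forall i, #|cl f B i| = #|cl f B' i|) -> c B = c B'.
Proof.
have conv : forall (V : finType) (f : V -> 'I_l) (c : {set V} -> C) (H : {set V}) K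
   (col : {ffun 'I_l -> 'I_K.+1} -> C),
   (forall B : {set V}, B \subset H -> #|B| = K -> c B = col (distn f K B)) ->
   forall B B' : {set V}, B \subset H -> B' \subset H -> #|B| = K ->
      #|B| = #|B'| -> (forall i, #|cl f B i| = #|cl f B' i|) -> c B = c B'.
  move=> V f c H K col Hc B B' BH B'H HB HBB' Hcl.
  rewrite (Hc B) // (Hc B') -?HBB' //; congr col; apply/ffunP => i; rewrite !ffunE Hcl. by [].
elim: Kmax => [|K IH] m.
  case: (ramsey_all 0 m) => N HN; exists N => V f S c HS.
  case: (HN V f S c HS) => H [HS' [Hm [col Hcol]]]; exists H; split => //; split => //.
  move=> B B' BH B'H; rewrite leqn0 => /eqP HB; exact: (conv _ _ _ _ _ _ Hcol).
case: (ramsey_all K.+1 m) => N1 HN1.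
case: (IH N1) => N HN; exists N => V f S c HS.
case: (HN V f S c HS) => H1 [H1S [H1m H1h]].
case: (HN1 V f H1 c H1m) => H [HH1 [Hm [col Hcol]]].
exists H; split; first exact: subset_trans HH1 H1S.
split => // B B' BH B'H; rewrite leq_eqVlt ltnS; case/orP => [/eqP HB|HB].
  exact: (conv _ _ _ _ _ _ Hcol).
apply: H1h => //; exact: subset_trans HH1.
Qed.

End Ram.

Lemma bigmin_le (I : finType) (F : I -> nat) x i0 : \big[minn/x]_(i : I) F i <= F i0.
Proof.
have : i0 \in index_enum I by rewrite mem_index_enum.
elim: (index_enum I) => [|j s IH] //; rewrite big_cons inE.
case/orP => [/eqP <-|H]; first exact: geq_minl.
exact: leq_trans (geq_minr _ _) (IH H).
Qed.

Definition img (V : finType) n (a : 'I_n -> V) : {set V} := [set a i | i in [set: 'I_n]].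

Lemma card_img (V : finType) n (a : 'I_n -> V) : injective a -> #|img a| = n.
Proof. by move=> ia; rewrite /img card_imset // cardsT card_ord. Qed.

Lemma cl_img (V : finType) l (f : V -> 'I_l) n (a : 'I_n -> V) i : injective a ->
  #|cl f (img a) i| = #|[set p | f (a p) == i]|.
Proof.
move=> ia; rewrite -(card_imset _ ia); apply: eq_card => v; rewrite !inE.
apply/andP/imsetP => [[/imsetP [p _ ->] E]|[p]]; first by exists p => //; rewrite inE.
by rewrite inE => E ->; split => //; apply/imsetP; exists p; rewrite ?inE.
Qed.

Lemma rank_eq (V : finType) l (f : V -> 'I_l) (le : rel V) (Im : {set V}) x y :
  split_order f le -> x \in Im -> y \in Im -> le x y ->
  #|[set z in Im | le z x]| = #|[set z in Im | le z y]| -> x = y.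
Proof.
case=> rf af tf _ xI yI lxy Hc.
have sub : [set z in Im | le z x] \subset [set z in Im | le z y].
  apply/subsetP => z; rewrite !inE => /andP[-> lzx] /=; exact: tf lzx lxy.
have : [set z in Im | le z x] == [set z in Im | le z y] by rewrite eqEcard sub Hc /=.
move/eqP => E; have : y \in [set z in Im | le z x] by rewrite E inE yI rf.
rewrite inE => /andP[_ lyx]; apply: af; by rewrite lxy lyx.
Qed.

Lemma typ_uniq (V : finType) l (f : V -> 'I_l) le n (a b : 'I_n -> V) :
  split_order f le -> injective a -> injective b -> img a = img b ->
  (forall p, f (a p) = f (b p)) -> (forall p q, le (a p) (a q) = le (b p) (b q)) ->
  forall p, a p = b p.
Proof.
move=> Hso ia ib Eab Hf Hle p.
have rk : forall (c : 'I_n -> V), injective c -> forall p,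
    #|[set z in img c | le z (c p)]| = #|[set q | le (c q) (c p)]|.
  move=> c ic p'; rewrite -(card_imset _ ic); apply: eq_card => v; rewrite !inE.
  apply/andP/imsetP => [[/imsetP [q _ ->] E]|[q]]; first by exists q => //; rewrite inE.
  by rewrite inE => E ->; split => //; apply/imsetP; exists q; rewrite ?inE.
have R : #|[set z in img a | le z (a p)]| = #|[set z in img a | le z (b p)]|.
  rewrite rk // Eab rk //; apply: eq_card => q; rewrite !inE Hle. by [].
have aI : a p \in img a by apply/imsetP; exists p; rewrite ?inE.
have bI : b p \in img a by rewrite Eab; apply/imsetP; exists p; rewrite ?inE.
have := Hso; case=> _ _ _ Hcmp.
have : le (a p) (b p) || le (b p) (a p) by rewrite Hcmp Hf.
case/orP => H; first exact: (rank_eq Hso aI bI H R).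
by symmetry; apply: (rank_eq Hso bI aI H); rewrite R.
Qed.

Lemma typ_valid (V : finType) l (f : V -> 'I_l) le n (a : 'I_n -> V) :
  split_order f le -> injective a ->
  split_order (fun i : 'I_n => [ffun i => f (a i)] i)
    (fun i j => (i, j) \in [set ij | le (a ij.1) (a ij.2)]).
Proof.
case=> rf af tf cf ia; split.
- by move=> i; rewrite inE rf.
- by move=> i j; rewrite !inE => H; apply: ia; apply: af.
- by move=> i j q; rewrite !inE; apply: tf.
- by move=> i j; rewrite !inE !ffunE cf.
Qed.

Theorem theorem2p2 :
  forall (L : finType) (k : L -> nat), (forall P : L, 0 < k P) ->
  forall (l : nat), 0 < l -> forall (m : nat) (T : utheory k),
  canonical_theory T ->
  exists n : nat,
    forall (M : structure k), models M T ->
    forall (f : vert M -> 'I_l) (le : rel (vert M)),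
      split_order f le -> n <= thk f ->
      exists (Q : pattern k l) (W : {set vert M}),
        valid_pattern Q /\ m <= thk_on f W /\ uniform_on M Q f le W.
Proof.
move=> L k _ l l0 m T _.
pose Idx := {P : L & ({ffun 'I_(k P) -> 'I_l} * {set 'I_(k P) * 'I_(k P)})%type}.
pose Kmax := \max_(P : L) k P.
case: (@ramsey_upto l {set Idx} Kmax m) => N HN; exists N.
move=> M _ f le Hso Hn.
pose typ (P : L) (a : {ffun 'I_(k P) -> vert M}) :=
  ([ffun i => f (a i)], [set ij | le (a ij.1) (a ij.2)]).
pose c (B : {set vert M}) := [set x : Idx | [exists a : {ffun 'I_(k (tag x)) -> vert M},
   [&& injectiveb a, img a == B, typ _ a == tagged x & rel_of M (tag x) a]]].
have HS : forall i, N <= #|cl f setT i|.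
  by move=> i; apply: leq_trans Hn _; apply: bigmin_le.
case: (HN _ f setT c HS) => H [_ [Hm Hh]].
pose Q : pattern k l := fun P => [set t | [exists a : {ffun 'I_(k P) -> vert M},
   [&& injectiveb a, [forall i, a i \in H], typ _ a == t & rel_of M P a]]].
exists Q, H; split; last split.
- move=> P g r; rewrite inE => /existsP [a /and4P [/injectiveP ia _ /eqP Ht _]].
  case: Ht => <- <-; exact: typ_valid.
- rewrite /thk_on; apply: (big_ind (fun y => m <= y)).
  + apply: leq_trans (Hm (Ordinal l0)) _; exact: cl_le.
  + by move=> x y Hx Hy; rewrite leq_min Hx Hy.
  + by move=> i _; exact: Hm.
- move=> P a ia aH; apply/idP/idP => [Hr|].
    rewrite inE; apply/existsP; exists a; rewrite Hr eqxx /= andbT.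
    by apply/andP; split; [apply/injectiveP | apply/forallP].
  rewrite inE => /existsP [b /and4P [/injectiveP ib /forallP bH /eqP Htyp Hrb]].
  have Hf : forall p, f (b p) = f (a p).
    by move=> p; have := congr1 (fun t : ({ffun 'I_(k P) -> 'I_l} * {set 'I_(k P) * 'I_(k P)})%type => t.1 p) Htyp; rewrite /= !ffunE.
  have Hl : forall p q, le (b p) (b q) = le (a p) (a q).
    by move=> p q; have := congr1 (fun t : ({ffun 'I_(k P) -> 'I_l} * {set 'I_(k P) * 'I_(k P)})%type => (p, q) \in t.2) Htyp; rewrite /= !inE.
  have imgH : forall d : {ffun 'I_(k P) -> vert M}, (forall i, d i \in H) -> img d \subset H.
    by move=> d dH; apply/subsetP => v /imsetP [p _ ->].
  have Ec : c (img b) = c (img a).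
    apply: Hh; rewrite ?imgH //.
    + by rewrite card_img //; apply: leq_bigmax.
    + by rewrite !card_img.
    + move=> i; rewrite !cl_img //; apply: eq_card => p; rewrite !inE Hf. by [].
  have : Tagged (fun P => ({ffun 'I_(k P) -> 'I_l} * {set 'I_(k P) * 'I_(k P)})%type)
           (typ P b) \in c (img b).
    rewrite inE; apply/existsP; exists b; rewrite /= !eqxx Hrb /= !andbT.
    by apply/injectiveP.
  rewrite Ec inE => /existsP [a' /and4P [/injectiveP ia' /eqP Ia' /eqP Ht' Hr']].
  have Eaa : forall p, a' p = a p.
    apply: (typ_uniq Hso) => //.
    + by move=> p; have := congr1 (fun t : ({ffun 'I_(k P) -> 'I_l} * {set 'I_(k P) * 'I_(k P)})%type => t.1 p) Ht'; rewrite /= !ffunE Hf.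
    + by move=> p q; have := congr1 (fun t : ({ffun 'I_(k P) -> 'I_l} * {set 'I_(k P) * 'I_(k P)})%type => (p, q) \in t.2) Ht'; rewrite /= !inE Hl.
  have -> : a = a' by apply/ffunP => p; rewrite Eaa.
  by [].
Qed.
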